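(* Let $n\ge 1$ and let $G_0=\mathbb{Z}^n$ be the graph with vertex set $\mathbb{Z}^n$ and edges between $a,b\in\mathbb{Z}^n$ iff $\sum_{k=1}^n|a_k-b_k|=1$. Let $G_{l+1}$ be the clique graph of $G_l$ for $l\ge0$. Then $G_{l+2}\cong G_l$ for every $l\ge 0$; in particular $G_{2k}\cong \mathbb{Z}^n$ and $G_{2k+1}\cong G_1$ for all $k\ge 0$.
   Context: Graphs are simple and undirected. A clique is a maximal complete subgraph. The clique graph of a graph $H$ has as vertices the cliques of $H$, two distinct cliques being adjacent iff they share at least one vertex. $\cong$ denotes graph isomorphism (bijection on vertices preserving adjacency in both directions). *)

(* Defs.v *)
From mathcomp Require Import all_boot all_algebra.
Set Implicit Arguments. Unset Strict Implicit. Unset Printing Implicit Defensive.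

Record graph := Graph { vtx : Type; adj : vtx -> vtx -> Prop }.

Definition complete (G : graph) (S : vtx G -> Prop) : Prop :=
  forall x y, S x -> S y -> x <> y -> adj x y.

Definition is_clique (G : graph) (S : vtx G -> Prop) : Prop :=
  complete S /\
  forall T : vtx G -> Prop, complete T -> (forall x, S x -> T x) ->
    forall x, T x -> S x.

Definition clique_graph (G : graph) : graph :=
  @Graph {S : vtx G -> Prop | is_clique S}
    (fun A B => proj1_sig A <> proj1_sig B /\
                exists v, proj1_sig A v /\ proj1_sig B v).

Fixpoint iter_clique (l : nat) (G : graph) : graph :=
  match l with 0 => G | l'.+1 => clique_graph (iter_clique l' G) end.

Definition isomorphic (G H : graph) : Prop :=
  exists f : vtx G -> vtx H, bijective f /\
    forall x y, adj x y <-> adj (f x) (f y).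

Definition Zgrid (n : nat) : graph :=
  @Graph {ffun 'I_n -> int}
    (fun a b => (\sum_(k < n) absz (a k - b k)%R)%N = 1%N).

(* Main.v *)
Require Import Defs.
From mathcomp Require Import all_boot all_algebra.
From Stdlib Require Import Classical FunctionalExtensionality PropExtensionality ProofIrrelevance ClassicalEpsilon.
Set Implicit Arguments. Unset Strict Implicit. Unset Printing Implicit Defensive.

Lemma pred_ext (T : Type) (P Q : T -> Prop) : (forall x, P x <-> Q x) -> P = Q.
Proof. move=> h; apply: functional_extensionality => x; apply: propositional_extensionality; exact: h. Qed.

Lemma sig_ext (T : Type) (P : T -> Prop) (A B : {x | P x}) : proj1_sig A = proj1_sig B -> A = B.
Proof. case: A => [a ha]; case: B => [b hb] /= e; subst b; by rewrite (proof_irrelevance _ ha hb). Qed.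

Record nice (G : graph) : Prop := Nice {
  n_sym : forall x y : vtx G, adj x y -> adj y x;
  n_irr : forall x : vtx G, ~ adj x x;
  n_tf : forall x y z : vtx G, adj x y -> adj y z -> adj x z -> False;
  n_deg : forall v : vtx G, exists a b, a <> b /\ adj v a /\ adj v b;
  n_inh : exists v : vtx G, True }.

Definition edge (G : graph) (u w : vtx G) : vtx G -> Prop := fun x => x = u \/ x = w.

Lemma edge_complete G (H : nice G) (u w : vtx G) : adj u w -> complete (edge u w).
Proof.
move=> uw x y [->|->] [->|->] nxy.
- by case: nxy.
- exact: uw.
- exact: (n_sym H uw).
- by case: nxy.
Qed.

Lemma edge_clique G (H : nice G) (u w : vtx G) : adj u w -> is_clique (edge u w).
Proof.
move=> uw; split; first exact: edge_complete.
move=> T cT sub x Tx.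
case: (classic (x = u)) => [->|xu]; first by left.
case: (classic (x = w)) => [->|xw]; first by right.
exfalso.
have Tu : T u by apply: sub; left.
have Tw : T w by apply: sub; right.
apply: (n_tf H uw (cT _ _ Tw Tx (fun e => xw (esym e)))).
exact: (n_sym H (cT _ _ Tx Tu xu)).
Qed.

Lemma clique_edge G (H : nice G) (C : vtx G -> Prop) : is_clique C ->
  exists u w, adj u w /\ forall x, C x <-> (x = u \/ x = w).
Proof.
move=> [cC mC].
have [u Cu] : exists u, C u.
  apply: NNPP => h.
  have [v0 _] := n_inh H.
  have : C v0.
    apply: (mC (fun x => x = v0)) => //.
    - by move=> x y -> -> ne; case: ne.
    - by move=> x Cx; exfalso; apply: h; exists x.
  by move=> Cv0; apply: h; exists v0.
have [w [Cw wu]] : exists w, C w /\ w <> u.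
  apply: NNPP => h.
  have [a [_ [_ [ua _]]]] := n_deg H u.
  have Ca : C a.
    apply: (mC (edge u a)); first exact: edge_complete.
    - move=> x Cx; left; apply: NNPP => xu; apply: h; by exists x.
    - by right.
  apply: h; exists a; split => // e; subst a; exact: (n_irr H ua).
have uw : adj u w by apply: cC => // e; apply: wu; rewrite e.
exists u, w; split => // x; split.
- move=> Cx.
  case: (classic (x = u)) => [->|xu]; first by left.
  case: (classic (x = w)) => [->|xw]; first by right.
  exfalso.
  apply: (n_tf H uw (cC _ _ Cw Cx (fun e => xw (esym e)))).
  exact: (cC _ _ Cu Cx (fun e => xu (esym e))).
- by case=> ->.
Qed.

Definition star (G : graph) (v : vtx G) : vtx (clique_graph G) -> Prop :=
  fun C => proj1_sig C v.

Definition edgeC G (H : nice G) (u w : vtx G) (uw : adj u w) : vtx (clique_graph G) :=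
  exist _ (edge u w) (edge_clique H uw).

Lemma star_clique G (H : nice G) (v : vtx G) : is_clique (star v).
Proof.
split.
  move=> C D Cv Dv ne; split; last by exists v.
  by move=> e; apply: ne; apply: sig_ext.
move=> T cT sub X TX.
apply: NNPP => nX.
have [a [b [ab [va vb]]]] := n_deg H v.
have TEa : T (edgeC H va) by apply: sub; rewrite /star /=; left.
have TEb : T (edgeC H vb) by apply: sub; rewrite /star /=; left.
have Xa : proj1_sig X a.
  have ne : X <> edgeC H va by move=> e; apply: nX; rewrite /star e /=; left.
  have [_ [y [Xy [ey|ey]]]] := cT _ _ TX TEa ne; subst y => //.
have Xb : proj1_sig X b.
  have ne : X <> edgeC H vb by move=> e; apply: nX; rewrite /star e /=; left.
  have [_ [y [Xy [ey|ey]]]] := cT _ _ TX TEb ne; subst y => //.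
have abE : adj a b := (proj1 (proj2_sig X)) a b Xa Xb ab.
exact: (n_tf H va abE vb).
Qed.

Lemma star_inj G (H : nice G) (v w : vtx G) : star v = star w -> v = w.
Proof.
move=> e.
have [a [b [ab [va vb]]]] := n_deg H v.
have h1 : star w (edgeC H va) by rewrite -e /star /=; left.
have h2 : star w (edgeC H vb) by rewrite -e /star /=; left.
case: h1 => [->//|wa]; case: h2 => [->//|wb].
by case: ab; rewrite -wa -wb.
Qed.

Lemma star_surj G (H : nice G) (Q : vtx (clique_graph G) -> Prop) :
  is_clique Q -> exists v, star v = Q.
Proof.
move=> [cQ mQ].
have [C QC] : exists C, Q C.
  apply: NNPP => h.
  have [v0 _] := n_inh H.
  have [a [_ [_ [va _]]]] := n_deg H v0.
  have : Q (edgeC H va).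
    apply: (mQ (fun x => x = edgeC H va)) => //.
    - by move=> x y -> -> ne; case: ne.
    - by move=> x Cx; exfalso; apply: h; exists x.
  by move=> q; apply: h; eexists; exact: q.
have [u [w [uw Cm]]] := clique_edge H (proj2_sig C).
have Cu : proj1_sig C u by apply/Cm; left.
have Cw : proj1_sig C w by apply/Cm; right.
have [v sub] : exists v, forall D, Q D -> proj1_sig D v.
  case: (classic (forall D, Q D -> proj1_sig D u)) => h; first by exists u.
  exists w => E QE; apply: NNPP => nEw; apply: h => D QD; apply: NNPP => nDu.
  have Dw : proj1_sig D w.
    have ne : D <> C by move=> e; apply: nDu; rewrite e.
    have [_ [y [Dy /Cm [ey|ey]]]] := cQ _ _ QD QC ne; subst y => //.
  have Eu : proj1_sig E u.
    have ne : E <> C by move=> e; apply: nEw; by subst.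
    have [_ [y [Ey /Cm [ey|ey]]]] := cQ _ _ QE QC ne; subst y => //.
  have ne : D <> E by move=> e; apply: nEw; rewrite -e.
  have [_ [z [Dz Ez]]] := cQ _ _ QD QE ne.
  have wz : adj w z by apply: (proj1 (proj2_sig D)) => // e; apply: nEw; by subst.
  have uz : adj u z by apply: (proj1 (proj2_sig E)) => // e; apply: nDu; by subst.
  exact: (n_tf H uw wz uz).
exists v; apply: pred_ext => D; split; last exact: sub.
move=> sD; apply: (mQ (star v)) => //; exact: (proj1 (star_clique H v)).
Qed.

Lemma kk_iso G (H : nice G) : isomorphic G (clique_graph (clique_graph G)).
Proof.
pose f (v : vtx G) : vtx (clique_graph (clique_graph G)) := exist _ (star v) (star_clique H v).
have surj : forall Q, exists v, f v = Q.
  move=> Q; have [v e] := star_surj H (proj2_sig Q).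
  by exists v; apply: sig_ext.
have inj : forall v w, f v = f w -> v = w.
  by move=> v w e; apply: (star_inj H); exact: (congr1 (@proj1_sig _ _) e).
pose g Q := proj1_sig (constructive_indefinite_description _ (surj Q)).
have fg : forall Q, f (g Q) = Q.
  by move=> Q; rewrite /g; case: constructive_indefinite_description.
exists f; split.
  exists g => [v|Q]; last exact: fg.
  by apply: inj; rewrite fg.
move=> v w; split.
- move=> vw; split.
    move=> e; have ee := star_inj H e; subst w; exact: (n_irr H vw).
  by exists (edgeC H vw); split; [left|right].
- move=> [ne [C [Cv Cw]]].
  apply: (proj1 (proj2_sig C)) => // e; subst w; exact: ne.
Qed.

Lemma iso_refl G : isomorphic G G.
Proof. exists id; split => //; exists id => //. Qed.

Lemma iso_sym G H : isomorphic G H -> isomorphic H G.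
Proof.
move=> [f [[g fg gf] hf]]; exists g; split; first by exists f.
by move=> x y; rewrite hf !gf.
Qed.

Lemma iso_trans G H K : isomorphic G H -> isomorphic H K -> isomorphic G K.
Proof.
move=> [f [bf hf]] [f' [bf' hf']]; exists (f' \o f); split.
  exact: bij_comp.
by move=> x y; rewrite hf hf'.
Qed.

Lemma iso_clique G H : isomorphic G H -> isomorphic (clique_graph G) (clique_graph H).
Proof.
move=> [f [[g gf fg] hf]].
have cl1 : forall S : vtx G -> Prop, is_clique S -> is_clique (fun y => S (g y)).
  move=> S [cS mS]; split.
    move=> y1 y2 S1 S2 ne; rewrite -(fg y1) -(fg y2) -hf.
    by apply: cS => // e; apply: ne; rewrite -(fg y1) -(fg y2) e.
  move=> T cT sub y Ty.
  apply: (mS (fun x => T (f x))).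
  - move=> x1 x2 T1 T2 ne; rewrite hf; apply: cT => // e; apply: ne.
    by rewrite -(gf x1) -(gf x2) e.
  - by move=> x Sx; apply: sub; rewrite gf.
  - by rewrite fg.
have cl2 : forall S : vtx H -> Prop, is_clique S -> is_clique (fun x => S (f x)).
  move=> S [cS mS]; split.
    move=> x1 x2 S1 S2 ne; rewrite hf.
    by apply: cS => // e; apply: ne; rewrite -(gf x1) -(gf x2) e.
  move=> T cT sub x Tx.
  apply: (mS (fun y => T (g y))).
  - move=> y1 y2 T1 T2 ne; rewrite -(fg y1) -(fg y2) -hf; apply: cT => // e; apply: ne.
    by rewrite -(fg y1) -(fg y2) e.
  - by move=> y Sy; apply: sub; rewrite fg.
  - by rewrite gf.
pose F (C : vtx (clique_graph G)) : vtx (clique_graph H) :=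
  exist _ _ (cl1 _ (proj2_sig C)).
pose Gi (C : vtx (clique_graph H)) : vtx (clique_graph G) :=
  exist _ _ (cl2 _ (proj2_sig C)).
exists F; split.
  exists Gi => C; apply: sig_ext; apply: pred_ext => x /=; by rewrite ?gf ?fg.
move=> C D; split.
- move=> [ne [v [Cv Dv]]]; split.
    move=> e; apply: ne; apply: pred_ext => x.
    by rewrite -(gf x); move: (congr1 (fun P => P (f x)) e) => /= ->.
  by exists (f v); rewrite /= !gf.
- move=> [ne [y [Cy Dy]]]; split; last by exists (g y).
  by move=> e; apply: ne => /=; rewrite e.
Qed.

Lemma iter_iso G : nice G -> forall l, isomorphic (iter_clique l.+2 G) (iter_clique l G).
Proof.
move=> H; elim=> [|l IH] /=; first exact: iso_sym (kk_iso H).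
exact: iso_clique.
Qed.

Import GRing.Theory.
Section Grid.
Local Open Scope ring_scope.

Lemma oppF2 (x : 'F_2) : (- x = x)%R.
Proof. apply/eqP; rewrite eq_sym -subr_eq0 opprK -mulr2n -mulr_natr.
  have -> : (2%:R = 0 :> 'F_2)%R by apply/eqP.
  by rewrite mulr0. Qed.
Lemma F2abs (z : int) : (z%:~R : 'F_2) = ((absz z)%:R)%R.
Proof. case: z => n //. by rewrite NegzE mulrNz oppF2 abszN. Qed.

Definition par n (a : {ffun 'I_n -> int}) : 'F_2 := (\sum_(k < n) (a k)%:~R)%R.

Lemma adj_par n (a b : vtx (Zgrid n)) : adj a b -> par a = (par b + 1)%R.
Proof.
move=> /= h; apply/eqP; rewrite -subr_eq0 opprD addrA -[X in (X - _ == _)%R]/(par a - par b)%R.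
rewrite /par -sumrB.
rewrite (eq_bigr (fun k => ((absz (a k - b k))%:R : 'F_2))%R); last first.
  by move=> k _; rewrite -F2abs intrB.
by rewrite -natr_sum h subrr.
Qed.

Lemma Zgrid_nice n : (1 <= n)%N -> nice (Zgrid n).
Proof.
move=> hn; split.
- move=> a b /= h; rewrite -h; apply: eq_bigr => k _; by rewrite -abszN opprB.
- move=> a /=; rewrite (eq_bigr (fun _ => 0%N)) ?big1 // => k _; by rewrite subrr.
- move=> x y z /adj_par hxy /adj_par hyz /adj_par hxz.
  have : (1 + 1 = 0 :> 'F_2)%R by apply/eqP.
  move: hxz; rewrite hxy hyz -addrA => /addrI ->; by [].
- move=> a; pose i0 : 'I_n := Ordinal hn.
  exists [ffun k => (a k + (k == i0)%:R)%R], [ffun k => (a k - (k == i0)%:R)%R].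
  have sumE : (\sum_(k < n) (k == i0) = 1)%N.
    rewrite (bigD1 i0) //= big1 // => k /negbTE ->; by [].
  split; [|split].
  + move=> e; move: (congr1 (fun f : {ffun 'I_n -> int} => f i0) e); rewrite !ffunE eqxx /=.
    move/addrI => /eqP; by [].
  + rewrite /= -[RHS]sumE; apply: eq_bigr => k _; rewrite ffunE opprD addrA subrr add0r abszN.
    by case: (k == i0).
  + rewrite /= -[RHS]sumE; apply: eq_bigr => k _; rewrite ffunE opprB addrC subrK.
    by case: (k == i0).
- by exists [ffun => 0%R].
Qed.

End Grid.

Theorem mainTheorem7 (n : nat) (hn : (1 <= n)%N) :
  (forall l : nat, isomorphic (iter_clique l.+2 (Zgrid n)) (iter_clique l (Zgrid n))) /\
  (forall k : nat, isomorphic (iter_clique (2 * k) (Zgrid n)) (Zgrid n)) /\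
  (forall k : nat, isomorphic (iter_clique (2 * k).+1 (Zgrid n)) (iter_clique 1 (Zgrid n))).
Proof.
have I := iter_iso (Zgrid_nice hn).
split; first exact: I.
split.
- elim=> [|k IH]; first exact: iso_refl.
  rewrite mulnS; exact: iso_trans (I _) IH.
- elim=> [|k IH]; first exact: iso_refl.
  rewrite mulnS; exact: iso_trans (I _) IH.
Qed.
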